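(* Let $G$ be a finite nilpotent group. Then $P(G)$ is a cograph if and only if either $|G|$ is a power of a prime, or $G$ is cyclic of order $pq$ for distinct primes $p$ and $q$.
   Context: The power graph $P(G)$ of a group $G$ has vertex set $G$, with distinct $u,v$ adjacent if and only if $u=v^i$ or $v=u^j$ for some integers $i,j$. A cograph is a graph with no induced subgraph isomorphic to the path $P_4$ on four vertices. *)

(* Defs.v *)
From mathcomp Require Import all_boot all_fingroup all_solvable.
Set Implicit Arguments. Unset Strict Implicit. Unset Printing Implicit Defensive.
Local Open Scope group_scope.

Definition pg_adj (gT : finGroupType) (u v : gT) : bool :=
  (u != v) && ((u \in <[v]>) || (v \in <[u]>)).

Definition pg_has_induced_P4 (gT : finGroupType) (G : {set gT}) : Prop :=
  exists a b c d : gT,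
    [/\ a \in G, b \in G, c \in G & d \in G] /\
    [/\ a != b, a != c & a != d] /\ [/\ b != c, b != d & c != d] /\
    [/\ pg_adj a b, pg_adj b c & pg_adj c d] /\
    [/\ ~~ pg_adj a c, ~~ pg_adj b d & ~~ pg_adj a d].

Definition power_graph_cograph (gT : finGroupType) (G : {set gT}) : Prop :=
  ~ pg_has_induced_P4 G.

(* Main.v *)
Require Import Defs.
From mathcomp Require Import all_boot all_fingroup all_solvable.


Lemma dpq d p q : prime p -> prime q -> p != q -> (d %| p * q)%N ->
  [\/ d = 1, d = p, d = q | d = p * q]%N.
Proof.
move=> pp pq npq dd.
have [pd|npd] := boolP (p %| d).
- have p0 : 0 < p by apply: prime_gt0.
  move: dd; rewrite -(divnK pd) mulnC dvdn_pmul2l // => H.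
  have [->|e1] := eqVneq (d %/ p) 1; first by rewrite muln1; constructor 2.
  by rewrite (prime_nt_dvdP pq e1 H); constructor 4.
- have co : coprime d p by rewrite coprime_sym prime_coprime.
  move: dd; rewrite Gauss_dvdr // => H.
  have [->|d1] := eqVneq d 1; first by constructor 1.
  by constructor 3; apply/(prime_nt_dvdP pq d1).
Qed.

Lemma numpq p q x y z w : prime p -> prime q -> p != q ->
  (x %| p * q)%N -> (y %| p * q)%N -> (z %| p * q)%N -> (w %| p * q)%N ->
  (x %| y) || (y %| x) -> (y %| z) || (z %| y) ->
  ~~ (x %| z) -> ~~ (z %| x) -> ~~ (y %| w) -> ~~ (w %| y) -> False.
Proof.
move=> pp pq npq dx dy dz dw.
have p1 := prime_gt1 pp; have q1 := prime_gt1 pq.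
have Fpq : (p %| q) = false by rewrite dvdn_prime2 // (negbTE npq).
have Fqp : (q %| p) = false by rewrite dvdn_prime2 // eq_sym (negbTE npq).
have Fp1 : (p %| 1) = false by rewrite dvdn1 gtn_eqF.
have Fq1 : (q %| 1) = false by rewrite dvdn1 gtn_eqF.
have Fa : (p * q %| p) = false.
  by apply/negP => /(dvdn_trans (dvdn_mull p (dvdnn q))); rewrite Fqp.
have Fb : (p * q %| q) = false.
  by apply/negP => /(dvdn_trans (dvdn_mulr q (dvdnn p))); rewrite Fpq.
have Fc : (p * q %| 1) = false.
  by apply/negP => /(dvdn_trans (dvdn_mulr q (dvdnn p))); rewrite Fp1.
have T1 : (p %| p * q) by apply: dvdn_mulr.
have T2 : (q %| p * q) by apply: dvdn_mull.
case: (@dpq _ _ _ pp pq npq dx) => ->; case: (@dpq _ _ _ pp pq npq dy) => ->;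
case: (@dpq _ _ _ pp pq npq dz) => ->; case: (@dpq _ _ _ pp pq npq dw) => ->;
rewrite ?dvd1n ?dvdnn ?Fpq ?Fqp ?Fp1 ?Fq1 ?Fa ?Fb ?Fc ?T1 ?T2 //.
Qed.
Local Open Scope group_scope.

Lemma ord_sub {gT : finGroupType} {u v : gT} : u \in <[v]> -> (#[u] %| #[v])%N.
Proof. by move=> H; apply: cardSg; rewrite cycle_subG. Qed.

Lemma cyc_div {gT : finGroupType} {u v w : gT} :
  u \in <[w]> -> v \in <[w]> -> (#[u] %| #[v])%N -> u \in <[v]>.
Proof.
move=> uw vw; rewrite -cycle_subG -(cardSg_cyclic (cycle_cyclic w)) //;
  by rewrite cycle_subG.
Qed.

Lemma cyc_trans {gT : finGroupType} {u v w : gT} :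
  u \in <[v]> -> v \in <[w]> -> u \in <[w]>.
Proof.
rewrite -!cycle_subG => H1 H2; exact: subset_trans H1 H2.
Qed.

Lemma adj_sym {gT : finGroupType} (u v : gT) : pg_adj u v = pg_adj v u.
Proof. by rewrite /pg_adj eq_sym orbC. Qed.

Lemma adj_ord {gT : finGroupType} {u v : gT} :
  u \in <[v]> -> ~~ (#[v] %| #[u])%N -> pg_adj u v.
Proof.
move=> uv nd; rewrite /pg_adj uv /= andbT; apply/eqP => E.
by move: nd; rewrite E dvdnn.
Qed.

Lemma nadjI {gT : finGroupType} {u v : gT} :
  u \notin <[v]> -> v \notin <[u]> -> (u != v) && ~~ pg_adj u v.
Proof.
move=> n1 n2; rewrite /pg_adj (negbTE n1) (negbTE n2) andbF andbT.
by apply/eqP => E; move: n1; rewrite E cycle_id.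
Qed.

Lemma nadj_ord {gT : finGroupType} {u v : gT} :
  ~~ (#[u] %| #[v])%N -> ~~ (#[v] %| #[u])%N -> (u != v) && ~~ pg_adj u v.
Proof.
move=> n1 n2; apply: nadjI; apply/negP => /ord_sub; by [rewrite (negbTE n1) | rewrite (negbTE n2)].
Qed.

Lemma ndvd {gT : finGroupType} {u v : gT} {r N : nat} :
  (r %| #[u])%N -> (#[v] %| N)%N -> ~~ (r %| N)%N -> ~~ (#[u] %| #[v])%N.
Proof.
move=> H1 H2 H3; apply/negP => H; move: H3; rewrite (dvdn_trans H1) //.
exact: dvdn_trans H H2.
Qed.

Lemma in_mulL {gT : finGroupType} {u v : gT} :
  commute u v -> coprime #[u] #[v] -> u \in <[u * v]>.
Proof. move=> c co; exact: (subsetP (cycleMsub c co)) _ (cycle_id u). Qed.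

Lemma in_mulR {gT : finGroupType} {u v : gT} :
  commute u v -> coprime #[u] #[v] -> v \in <[u * v]>.
Proof.
move=> c co; rewrite c; apply: in_mulL; first by [].
by rewrite coprime_sym.
Qed.

Lemma ord_mul {gT : finGroupType} {u v : gT} :
  commute u v -> (#[u * v] %| #[u] * #[v])%N.
Proof.
move=> c; rewrite order_dvdn expgMn // expgM expg_order expg1n mul1g.
by rewrite mulnC expgM expg_order expg1n.
Qed.

Lemma nil_comm {gT : finGroupType} {G : {group gT}} {u v : gT} :
  nilpotent G -> u \in G -> v \in G -> coprime #[u] #[v] -> commute u v.
Proof.
move=> nG uG vG co.
have sU : <[u]> \subset G by rewrite cycle_subG.
have sV : <[v]> \subset G by rewrite cycle_subG.
have := sub_nilpotent_cent2 nG sU sV co.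
rewrite cycle_subG => H; have : v \in 'C[u] by rewrite -cent_cycle.
move=> /cent1P c; exact: esym c.
Qed.

Lemma mkP4 {gT : finGroupType} (G : {set gT}) (a b c d : gT) :
  a \in G -> b \in G -> c \in G -> d \in G ->
  pg_adj a b -> pg_adj b c -> pg_adj c d ->
  (a != c) && ~~ pg_adj a c -> (b != d) && ~~ pg_adj b d ->
  (a != d) && ~~ pg_adj a d -> pg_has_induced_P4 G.
Proof.
move=> aG bG cG dG ab bc cd /andP[ac nac] /andP[bd nbd] /andP[ad nad].
exists a, b, c, d; split; first by [].
have := ab; have := bc; have := cd; rewrite /pg_adj.
move=> /andP[cd' _] /andP[bc' _] /andP[ab' _].
by do !split.
Qed.

Lemma chainP {gT : finGroupType} {G : {group gT}} {p k} {u v w : gT} :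
  prime p -> #|G| = (p ^ k)%N -> u \in G -> v \in G ->
  u \in <[w]> -> v \in <[w]> -> (u \in <[v]>) || (v \in <[u]>).
Proof.
move=> pp cG uG vG uw vw.
have := order_dvdG uG; have := order_dvdG vG; rewrite cG.
move=> /(dvdn_pfactor _ _ pp) [j _ ej] /(dvdn_pfactor _ _ pp) [i _ ei].
case: (leqP i j) => h.
- by rewrite (cyc_div uw vw) // ei ej dvdn_exp2l.
- by rewrite (cyc_div vw uw) ?orbT // ei ej dvdn_exp2l // ltnW.
Qed.

Lemma dirA {gT : finGroupType} (G : {group gT}) p k :
  prime p -> #|G| = (p ^ k)%N -> power_graph_cograph G.
Proof.
move=> pp cG [a [b [c [d [[aG bG cG' dG] [[ab' ac ad] [[bc' bd cd'] [[ab bc cd] [nac nbd nad]]]]]]]]].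
move: ab bc cd nac nbd nad; rewrite /pg_adj ac bd ad /=.
move=> /andP[_ ab] /andP[_ bc] /andP[_ cd].
rewrite !negb_or => /andP[nac nca] /andP[nbd ndb] /andP[nad nda].
case/orP: bc => [Rbc|Rcb].
- case/orP: cd => [Rcd|Rdc].
  + by move: nbd; rewrite (cyc_trans Rbc Rcd).
  + by move: (chainP pp cG bG dG Rbc Rdc); rewrite (negbTE nbd) (negbTE ndb).
- case/orP: ab => [Rab|Rba].
  + by move: (chainP pp cG aG cG' Rab Rcb); rewrite (negbTE nac) (negbTE nca).
  + by move: nca; rewrite (cyc_trans Rcb Rba).
Qed.

Lemma dirB {gT : finGroupType} (G : {group gT}) p q :
  prime p -> prime q -> p != q -> cyclic G -> #|G| = (p * q)%N ->
  power_graph_cograph G.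
Proof.
move=> pp pq npq /cyclicP [g defG] cG.
move=> [a [b [c [d [[aG bG cG' dG] [[ab' ac ad] [[bc' bd cd'] [[ab bc cd] [nac nbd nad]]]]]]]]].
have D : forall u, u \in G -> (#[u] %| p * q)%N by move=> u uG; rewrite -cG order_dvdG.
have R : forall u v, u \in G -> v \in G -> (#[u] %| #[v])%N -> u \in <[v]>.
  by move=> u v uG vG; apply: (@cyc_div _ u v g); rewrite -defG.
have N : forall u v, u \in G -> v \in G -> u != v -> ~~ pg_adj u v -> ~~ (#[u] %| #[v])%N.
  move=> u v uG vG uv; apply: contra; move=> H.
  by rewrite /pg_adj (R u v uG vG H) /= andbT.
have A : forall u v : gT, pg_adj u v -> (#[u] %| #[v])%N || (#[v] %| #[u])%N.
  move=> u v; rewrite /pg_adj => /andP[_ /orP[/ord_sub -> // | /ord_sub ->]].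
  by rewrite orbT.
apply: (@numpq p q #[a] #[b] #[c] #[d] pp pq npq (D a aG) (D b bG) (D c cG') (D d dG) (A a b ab) (A b c bc)
  (N a c aG cG' ac nac) _ (N b d bG dG bd nbd)).
- by apply: (N c a cG' aG); [rewrite eq_sym | rewrite adj_sym].
- by apply: (N d b dG bG); [rewrite eq_sym | rewrite adj_sym].
Qed.

Lemma pfacts p q : prime p -> prime q -> p != q ->
  [/\ ~~ (p %| q)%N, ~~ (q %| p)%N, coprime p q & coprime q p].
Proof.
move=> pp pq npq.
have Fpq : ~~ (p %| q)%N by rewrite dvdn_prime2 // npq.
have Fqp : ~~ (q %| p)%N by rewrite dvdn_prime2 // eq_sym npq.
by split => //; rewrite prime_coprime.
Qed.

Lemma L1 {gT : finGroupType} (G : {group gT}) p q (x y w : gT) :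
  nilpotent G -> prime p -> prime q -> p != q -> x \in G -> y \in G -> w \in G ->
  #[x] = p -> #[y] = q -> p.-elt w -> w \notin <[x]> -> pg_has_induced_P4 G.
Proof.
move=> nG pp pq npq xG yG wG ox oy pw nwx.
have p0 := prime_gt0 pp; have p1 := prime_gt1 pp.
have [Fpq Fqp cpq cqp] := @pfacts p q pp pq npq.
have CO : forall u v, u \in G -> v \in G -> #[u] = p -> #[v] = q ->
    [/\ commute u v, u \in <[u * v]>, v \in <[u * v]> & (#[u * v] %| p * q)%N].
  move=> u v uG vG ou ov.
  have co : coprime #[u] #[v] by rewrite ou ov.
  have cuv := nil_comm nG uG vG co.
  by split; [|exact: in_mulL|exact: in_mulR|rewrite -ou -ov ord_mul].
case: (p_natP pw) => k ow.
case: k ow => [|[|k]] ow.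
- have /eqP w1 : w == 1 by rewrite -order_eq1 ow.
  by move: nwx; rewrite w1 group1.
- rewrite expn1 in ow.
  have [cxy xxy yxy oxy] := CO x y xG yG ox oy.
  have [cwy wwy ywy owy] := CO w y wG yG ow oy.
  have NW : forall u, w \in <[u]> -> x \in <[u]> -> False.
    move=> u H1 H2; move: nwx; rewrite (cyc_div H1 H2) // ow ox //.
  apply: (@mkP4 _ G x (x * y) y (w * y)); rewrite ?groupM //.
  + apply: adj_ord => //; apply: (ndvd (r := q) (N := p)) => //.
      by rewrite -oy ord_sub. by rewrite ox.
  + rewrite adj_sym; apply: adj_ord => //; apply: (ndvd (r := p) (N := q)) => //.
      by rewrite -ox ord_sub. by rewrite oy.
  + apply: adj_ord => //; apply: (ndvd (r := p) (N := q)) => //.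
      by rewrite -ow ord_sub. by rewrite oy.
  + by apply: nadj_ord; rewrite ox oy.
  + apply: nadjI; apply/negP => H.
    * exact: (NW _ (cyc_trans wwy ywy) (cyc_trans xxy H)) || exact: (NW _ wwy (cyc_trans xxy H)).
    * exact: (NW _ (cyc_trans wwy H) xxy).
  + apply: nadjI; apply/negP => H.
    * exact: (NW _ wwy H).
    * move: (ord_sub (cyc_trans ywy H)); rewrite oy ox; apply/negP => //.
- set w' := w ^+ (p ^ k.+1).
  have ow' : #[w'] = p.
    rewrite orderXdiv; last by rewrite ow dvdn_exp2l.
    by rewrite ow [in X in X %/ _]expnS mulnK // expn_gt0 p0.
  have w'w : w' \in <[w]> by rewrite mem_cycle.
  have w'G : w' \in G by rewrite groupX.
  have [cxy xxy yxy oxy] := CO w' y w'G yG ow' oy.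
  have Fpp : ~~ (p * p %| p)%N.
    by rewrite -{3}(muln1 p) dvdn_pmul2l // dvdn1 gtn_eqF.
  have Fppq : ~~ (p * p %| p * q)%N by rewrite dvdn_pmul2l.
  have ppw : (p * p %| #[w])%N by rewrite ow !expnS mulnA dvdn_mulr.
  have qw : ~~ (q %| #[w])%N by rewrite ow Euclid_dvdX // negb_and Fqp.
  apply: (@mkP4 _ G w w' (w' * y) y); rewrite ?groupM //.
  + rewrite adj_sym; apply: adj_ord => //; apply: (ndvd (r := p * p) (N := p)) => //.
    by rewrite ow'.
  + apply: adj_ord => //; apply: (ndvd (r := q) (N := p)) => //.
      by rewrite -oy ord_sub. by rewrite ow'.
  + rewrite adj_sym; apply: adj_ord => //; apply: (ndvd (r := p) (N := q)) => //.
      by rewrite -ow' ord_sub. by rewrite oy.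
  + apply: nadj_ord.
    * exact: (ndvd (r := p * p) (N := p * q)).
    * apply: (ndvd (r := q) (N := #[w])) => //. by rewrite -oy ord_sub.
  + by apply: nadj_ord; rewrite ow' oy.
  + apply: nadj_ord.
    * apply: (ndvd (r := p) (N := q)); rewrite ?oy //.
      exact: dvdn_trans (dvdn_mulr p (dvdnn p)) ppw.
    * by rewrite oy.
Qed.

Lemma L3 {gT : finGroupType} (G : {group gT}) p q r (x y z : gT) :
  nilpotent G -> prime p -> prime q -> prime r -> p != q -> q != r -> r != p ->
  x \in G -> y \in G -> z \in G ->
  #[x] = p -> #[y] = q -> #[z] = r -> pg_has_induced_P4 G.
Proof.
move=> nG pp pq pr npq nqr nrp xG yG zG ox oy oz.
have [Fpq Fqp cpq cqp] := @pfacts p q pp pq npq.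
have [Fqr Frq cqr crq] := @pfacts q r pq pr nqr.
have [Frp Fpr crp cpr] := @pfacts r p pr pp nrp.
have cxy : commute x y by apply: (nil_comm nG xG yG); rewrite ox oy.
have cyz : commute y z by apply: (nil_comm nG yG zG); rewrite oy oz.
have xxy : x \in <[x * y]> by apply: in_mulL => //; rewrite ox oy.
have yxy : y \in <[x * y]> by apply: in_mulR => //; rewrite ox oy.
have yyz : y \in <[y * z]> by apply: in_mulL => //; rewrite oz oy.
have zyz : z \in <[y * z]> by apply: in_mulR => //; rewrite oz oy.
have oxy : (#[x * y] %| p * q)%N by rewrite -ox -oy ord_mul.
have oyz : (#[y * z] %| q * r)%N by rewrite -oy -oz ord_mul.
apply: (@mkP4 _ G x (x * y) y (y * z)); rewrite ?groupM //.
- apply: adj_ord => //; apply: (ndvd (r := q) (N := p)) => //.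
    by rewrite -oy ord_sub. by rewrite ox.
- rewrite adj_sym; apply: adj_ord => //; apply: (ndvd (r := p) (N := q)) => //.
    by rewrite -ox ord_sub. by rewrite oy.
- apply: adj_ord => //; apply: (ndvd (r := r) (N := q)) => //.
    by rewrite -oz ord_sub. by rewrite oy.
- by apply: nadj_ord; rewrite ox oy.
- apply: nadj_ord.
  + apply: (ndvd (r := p) (N := q * r)) => //. by rewrite -ox ord_sub.
    by rewrite Euclid_dvdM // negb_or Fpq Fpr.
  + apply: (ndvd (r := r) (N := p * q)) => //. by rewrite -oz ord_sub.
    by rewrite Euclid_dvdM // negb_or Frp Frq.
- apply: nadj_ord.
  + apply: (ndvd (r := p) (N := q * r)) => //. by rewrite ox.
    by rewrite Euclid_dvdM // negb_or Fpq Fpr.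
  + apply: (ndvd (r := q) (N := p)) => //. by rewrite -oy ord_sub.
    by rewrite ox.
Qed.

Lemma dir2 {gT : finGroupType} (G : {group gT}) : nilpotent G -> power_graph_cograph G ->
  ((exists p k : nat, prime p /\ #|G| = (p ^ k)%N) \/
    (exists p q : nat, [/\ prime p, prime q, p != q,
                          cyclic G & #|G| = (p * q)%N])).
Proof.
move=> nG ncg.
have [G1|Gn1] := leqP #|G| 1.
  by left; exists 2, 0; split => //; apply/eqP; rewrite eqn_leq G1 cardG_gt0.
have pp : prime (pdiv #|G|) := pdiv_prime Gn1.
set p := pdiv #|G| in pp.
have [pn|npn] := boolP (p.-nat #|G|).
  by left; case: (p_natP pn) => k ->; exists p, k.
move: npn; rewrite /pnat cardG_gt0 /= => /allPn [q qP nqp].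
move: qP; rewrite mem_primes => /and3P [pq _ qG].
have npq : p != q by move: nqp; rewrite /in_mem /= eq_sym.
have [Fpq Fqp cpq cqp] := @pfacts p q pp pq npq.
have [x xG ox] := Cauchy pp (pdiv_dvd #|G|).
have [y yG oy] := Cauchy pq qG.
have cxy : commute x y by apply: (nil_comm nG xG yG); rewrite ox oy.
have co : coprime #[x] #[y] by rewrite ox oy.
have KEY : forall g, g \in G -> g \in <[x * y]>.
  move=> g gG; rewrite -(consttC p g) cycleM //.
  have sg : <[g]> \subset G by rewrite cycle_subG.
  have gpG : g.`_p \in G by apply: (subsetP sg); apply: cycle_constt.
  have gp'G : g.`_p^' \in G by apply: (subsetP sg); apply: cycle_constt.
  apply: mem_mulg.
    apply/negPn/negP => H; apply: ncg.
    exact: (@L1 _ G p q x y _ nG pp pq npq xG yG gpG ox oy (p_elt_constt p g) H).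
  apply/negPn/negP => H; apply: ncg.
  set h := g.`_p^' in gp'G H.
  have ph : p^'.-elt h by apply: p_elt_constt.
  have [qh|nqh] := boolP (q.-elt h).
    by apply: (@L1 _ G q p y x _ nG pq pp _ yG xG gp'G oy ox qh H); rewrite eq_sym.
  move: nqh; rewrite /p_elt /pnat order_gt0 /= => /allPn [r rP nrq].
  have rpi : r \in \pi(#[h]) by [].
  move: rP; rewrite mem_primes => /and3P [pr _ rh].
  have nrp := pnatPpi ph rpi.
  have [z zh oz] := Cauchy pr rh.
  have zG : z \in G by move: zh; apply/subsetP; rewrite cycle_subG.
  apply: (@L3 _ G p q r x y z nG pp pq pr npq _ _ xG yG zG ox oy oz).
    by move: nrq; rewrite /in_mem /= eq_sym.
  by move: nrp; rewrite /in_mem /=.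
have EG : G :=: <[x * y]>.
  apply/eqP; rewrite eqEsubset; apply/andP; split; first by apply/subsetP.
  by rewrite cycle_subG groupM.
right; exists p, q; split => //.
  by apply/cyclicP; exists (x * y).
rewrite EG cycleM // TI_cardMg; first by rewrite -ox -oy.
by apply: coprime_TIg.
Qed.

Theorem mainTheorem5 (gT : finGroupType) (G : {group gT}) :
  nilpotent G ->
  (power_graph_cograph G <->
   ((exists p k : nat, prime p /\ #|G| = (p ^ k)%N) \/
    (exists p q : nat, [/\ prime p, prime q, p != q,
                          cyclic G & #|G| = (p * q)%N]))).
Proof.
move=> nG; split; first exact: dir2.
case=> [[p [k [pp cG]]] | [p [q [pp pq npq cyc cG]]]].
- exact: dirA pp cG.
- exact: dirB pp pq npq cyc cG.
Qed.
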